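(* Let $A$ and $B$ be C$^*$-algebras, where $A$ is unital with unit $1$, and let $T:A\to B$ be a bounded linear map which is a $^*$-homomorphism at a unitary element $u\in A$. Then $T(1)$ is a projection, $T(1)T(a)=T(a)T(1)$ for every $a\in A$, and $T(1)T$ (the map $a\mapsto T(1)T(a)$) is a Jordan homomorphism. Furthermore, if in addition $T(1)T(x)=T(x)$ for every $x\in A$ (which is the case when $B$ is unital and $T(u)$ is a unitary in $B$), then $T$ is a Jordan homomorphism.
   Context: A map $T:A\to B$ between C$^*$-algebras is a $^*$-homomorphism at $z\in A$ if for all $a,b\in A$ with $ab^*=z$ one has $T(ab^* )=T(a)T(b)^*=T(z)$, and for all $c,d\in A$ with $c^*d=z$ one has $T(c^*d)=T(c)^*T(d)=T(z)$. A Jordan homomorphism is a linear map $S$ with $S(a\circ b)=S(a)\circ S(b)$ for all $a,b$, where $a\circ b=\frac12(ab+ba)$. *)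

(* Defs.v *)
From HB Require Import structures.
From mathcomp Require Import all_boot all_order all_algebra.
From mathcomp Require Import reals complex.
Set Implicit Arguments. Unset Strict Implicit. Unset Printing Implicit Defensive.
Import Order.TTheory GRing.Theory Num.Theory.
Local Open Scope ring_scope.

Definition cabs (R : realType) (k : R[i]) : R := Normc.normc k.

Record cstar_axioms (R : realType) (V : lmodType R[i])
    (mul : V -> V -> V) (star : V -> V) (nrm : V -> R) : Prop := {
  cs_mulA : forall a b c, mul a (mul b c) = mul (mul a b) c;
  cs_mulDl : forall a b c, mul (a + b) c = mul a c + mul b c;
  cs_mulDr : forall a b c, mul a (b + c) = mul a b + mul a c;
  cs_mulZl : forall (k : R[i]) a b, mul (k *: a) b = k *: mul a b;
  cs_mulZr : forall (k : R[i]) a b, mul a (k *: b) = k *: mul a b;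
  cs_starK : forall a, star (star a) = a;
  cs_starD : forall a b, star (a + b) = star a + star b;
  cs_starZ : forall (k : R[i]) a, star (k *: a) = conjc k *: star a;
  cs_starM : forall a b, star (mul a b) = mul (star b) (star a);
  cs_nrm_eq0 : forall a, nrm a = 0 -> a = 0;
  cs_nrm_ge0 : forall a, 0 <= nrm a;
  cs_nrmD : forall a b, nrm (a + b) <= nrm a + nrm b;
  cs_nrmZ : forall (k : R[i]) a, nrm (k *: a) = cabs k * nrm a;
  cs_nrmM : forall a b, nrm (mul a b) <= nrm a * nrm b;
  cs_cstar : forall a, nrm (mul (star a) a) = nrm a ^+ 2;
  cs_complete : forall u : nat -> V,
    (forall e : R, 0 < e -> exists N : nat, forall m n : nat,
        (N <= m)%N -> (N <= n)%N -> nrm (u m - u n) < e) ->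
    exists l : V, forall e : R, 0 < e -> exists N : nat, forall n : nat,
        (N <= n)%N -> nrm (u n - l) < e
}.

Record cstarAlg (R : realType) := CStarAlg {
  cs_carrier :> lmodType R[i];
  cs_mul : cs_carrier -> cs_carrier -> cs_carrier;
  cs_star : cs_carrier -> cs_carrier;
  cs_nrm : cs_carrier -> R;
  cs_ax : cstar_axioms cs_mul cs_star cs_nrm
}.

Section Defs.
Variable R : realType.

Definition cs_jprod (A : cstarAlg R) (a b : A) : A :=
  (2%:R^-1 : R[i]) *: (cs_mul a b + cs_mul b a).

Definition cs_linear (A B : cstarAlg R) (T : A -> B) : Prop :=
  (forall a b, T (a + b) = T a + T b) /\ (forall (k : R[i]) a, T (k *: a) = k *: T a).

Definition cs_bounded (A B : cstarAlg R) (T : A -> B) : Prop :=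
  exists M : R, forall a, cs_nrm (T a) <= M * cs_nrm a.

Definition cs_unit_of (A : cstarAlg R) (e : A) : Prop :=
  forall a, cs_mul e a = a /\ cs_mul a e = a.

Definition cs_unitary (A : cstarAlg R) (e u : A) : Prop :=
  cs_mul (cs_star u) u = e /\ cs_mul u (cs_star u) = e.

Definition cs_projection (A : cstarAlg R) (p : A) : Prop :=
  cs_mul p p = p /\ cs_star p = p.

Definition cs_star_hom_at (A B : cstarAlg R) (T : A -> B) (z : A) : Prop :=
  (forall a b : A, cs_mul a (cs_star b) = z ->
     T (cs_mul a (cs_star b)) = cs_mul (T a) (cs_star (T b)) /\
     cs_mul (T a) (cs_star (T b)) = T z) /\
  (forall c d : A, cs_mul (cs_star c) d = z ->
     T (cs_mul (cs_star c) d) = cs_mul (cs_star (T c)) (T d) /\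
     cs_mul (cs_star (T c)) (T d) = T z).

Definition cs_jordan_hom (A B : cstarAlg R) (S : A -> B) : Prop :=
  cs_linear S /\ forall a b, S (cs_jprod a b) = cs_jprod (S a) (S b).

End Defs.

(* Main.v *)
Require Import Defs.
From mathcomp Require Import all_boot all_order all_algebra.
From mathcomp Require Import reals complex.
From mathcomp Require Import ring lra.
Set Implicit Arguments. Unset Strict Implicit. Unset Printing Implicit Defensive.
Import Order.TTheory GRing.Theory Num.Theory.
Local Open Scope ring_scope.
Local Open Scope complex_scope.
Local Open Scope ring_scope.
Section Basics.
Variable R : realType.
Variable A : cstarAlg R.
Local Notation "x ** y" := (@cs_mul R A x y) (at level 40, left associativity).
Local Notation st := (@cs_star R A).
Local Notation nrm := (@cs_nrm R A).
Local Notation ax := (cs_ax A).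

Lemma mA (a b c : A) : a ** (b ** c) = a ** b ** c. Proof. by apply: (cs_mulA ax). Qed.
Lemma mDl (a b c : A) : (a + b) ** c = a ** c + b ** c. Proof. by apply: (cs_mulDl ax). Qed.
Lemma mDr (a b c : A) : a ** (b + c) = a ** b + a ** c. Proof. by apply: (cs_mulDr ax). Qed.
Lemma mZl k (a b : A) : (k *: a) ** b = k *: (a ** b). Proof. by apply: (cs_mulZl ax). Qed.
Lemma mZr k (a b : A) : a ** (k *: b) = k *: (a ** b). Proof. by apply: (cs_mulZr ax). Qed.
Lemma m0l (a : A) : 0 ** a = 0.
Proof. by apply: (addrI (0 ** a)); rewrite -mDl !addr0. Qed.
Lemma m0r (a : A) : a ** 0 = 0.
Proof. by apply: (addrI (a ** 0)); rewrite -mDr !addr0. Qed.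
Lemma mNl (a b : A) : (- a) ** b = - (a ** b).
Proof. by apply/eqP; rewrite -subr_eq0 opprK -mDl addNr m0l. Qed.
Lemma mNr (a b : A) : a ** (- b) = - (a ** b).
Proof. by apply/eqP; rewrite -subr_eq0 opprK -mDr addNr m0r. Qed.
Lemma mBl (a b c : A) : (a - b) ** c = a ** c - b ** c. Proof. by rewrite mDl mNl. Qed.
Lemma mBr (a b c : A) : a ** (b - c) = a ** b - a ** c. Proof. by rewrite mDr mNr. Qed.
Lemma sK (a : A) : st (st a) = a. Proof. by apply: (cs_starK ax). Qed.
Lemma sD (a b : A) : st (a + b) = st a + st b. Proof. by apply: (cs_starD ax). Qed.
Lemma sZ k (a : A) : st (k *: a) = conjc k *: st a. Proof. by apply: (cs_starZ ax). Qed.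
Lemma sM (a b : A) : st (a ** b) = st b ** st a. Proof. by apply: (cs_starM ax). Qed.
Lemma s0 : st 0 = 0.
Proof. by apply: (addrI (st 0)); rewrite -sD !addr0. Qed.
Lemma sN (a : A) : st (- a) = - st a.
Proof. by apply/eqP; rewrite -subr_eq0 opprK -sD addNr s0. Qed.
Lemma sB (a b : A) : st (a - b) = st a - st b. Proof. by rewrite sD sN. Qed.

Lemma n_ge0 (a : A) : 0 <= nrm a. Proof. by apply: (cs_nrm_ge0 ax). Qed.
Lemma n_eq0 (a : A) : nrm a = 0 -> a = 0. Proof. by apply: (cs_nrm_eq0 ax). Qed.
Lemma nD (a b : A) : nrm (a + b) <= nrm a + nrm b. Proof. by apply: (cs_nrmD ax). Qed.
Lemma nM (a b : A) : nrm (a ** b) <= nrm a * nrm b. Proof. by apply: (cs_nrmM ax). Qed.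
Lemma nZ k (a : A) : nrm (k *: a) = cabs k * nrm a. Proof. by apply: (cs_nrmZ ax). Qed.
Lemma nC (a : A) : nrm (st a ** a) = nrm a ^+ 2. Proof. by apply: (cs_cstar ax). Qed.

Lemma cabsN1 : cabs (-1 : R[i]) = 1.
Proof. by rewrite /cabs normcN Normc.normc1. Qed.
Lemma cabs0 : cabs (0 : R[i]) = 0.
Proof. by rewrite /cabs Normc.normc0. Qed.
Lemma cabsR (s : R) : cabs (s%:C) = `|s|.
Proof. by rewrite /cabs /= expr0n /= addr0 sqrtr_sqr. Qed.

Lemma n0 : nrm 0 = 0.
Proof. by rewrite -(scale0r (0:A)) nZ cabs0 mul0r. Qed.
Lemma nN (a : A) : nrm (- a) = nrm a.
Proof. by rewrite -scaleN1r nZ cabsN1 mul1r. Qed.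
Lemma nB (a b : A) : nrm (a - b) <= nrm a + nrm b.
Proof. by rewrite -(nN b); apply: nD. Qed.
Lemma nBC (a b : A) : nrm (a - b) = nrm (b - a).
Proof. by rewrite -nN opprB. Qed.
Lemma nS (a : A) : nrm (st a) = nrm a.
Proof.
have H : forall x : A, nrm x <= nrm (st x).
  move=> x; have := nM (st x) x; rewrite nC expr2 => h.
  have [x0|xpos] := eqVneq (nrm x) 0; first by rewrite x0 n_ge0.
  have hx : 0 < nrm x by rewrite lt0r xpos n_ge0.
  by rewrite -(ler_pM2r hx).
by apply/eqP; rewrite eq_le H -{2}(sK a) H.
Qed.

Lemma eps0 (a : A) : (forall e : R, 0 < e -> nrm a <= e) -> a = 0.
Proof.
move=> H; apply: n_eq0; apply/eqP; rewrite eq_le n_ge0 andbT.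
apply/unstable.ler_gtP => z z0; exact: H.
Qed.

Lemma unit_star (one : A) : cs_unit_of one -> st one = one.
Proof.
move=> U; rewrite -{1}[st one](U (st one)).2 -{2}[one]sK -sM (U (st one)).2 sK //.
Qed.

Lemma unit_nrm (one : A) : cs_unit_of one -> nrm one <= 1.
Proof.
move=> U; have := nC one; rewrite unit_star // (U one).1 expr2 => h.
have [x0|xpos] := eqVneq (nrm one) 0; first by rewrite x0 ler01.
have hx : 0 < nrm one by rewrite lt0r xpos n_ge0.
by rewrite -(ler_pM2r hx) mul1r -h.
Qed.
End Basics.
Section Real.
Variable R : realType.
Lemma half_pow_le (n : nat) : (n%:R + 1) * (2^-1 : R) ^+ n <= 1.
Proof.
elim: n => [|n IH]; first by rewrite expr0 add0r mulr1.
rewrite exprS -natr1.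
have h0 : 0 <= (2^-1 : R) ^+ n by apply: exprn_ge0; rewrite invr_ge0 ler0n.
have hn : 0 <= (n%:R : R) by rewrite ler0n.
set x := (2^-1 : R) ^+ n in h0 IH *.
have -> : (n%:R + 1 + 1) * (2^-1 * x) = (n%:R + 2) / 2 * x :> R by field.
have : (n%:R + 2) / 2 <= n%:R + (1:R) by rewrite ler_pdivrMr //; lra.
move=> h; apply: le_trans IH; exact: ler_wpM2r.
Qed.

Lemma half_pow_small (e : R) : 0 < e -> exists N : nat, forall n, (N <= n)%N -> (2^-1 : R) ^+ n < e.
Proof.
move=> e0; exists (Num.Def.archi_bound (e^-1)) => n hn.
have hi : 0 <= e^-1 by rewrite invr_ge0 ltW.
have h := archi_boundP hi.
have h2 : (Num.Def.archi_bound (e^-1))%:R <= (n%:R : R) by rewrite ler_nat.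
have h3 := half_pow_le n.
have h0 : 0 <= (2^-1 : R) ^+ n by apply: exprn_ge0; rewrite invr_ge0 ler0n.
have : e^-1 < n%:R + 1 by lra.
rewrite -(ltr_pM2r e0) mulVf ?gt_eqF // => h4.
have : (n%:R + 1) * (2^-1 : R) ^+ n < (n%:R + 1) * e by lra.
rewrite ltr_pM2l //; lra.
Qed.

Lemma half_pow_mono (m n : nat) : (m <= n)%N -> (2^-1 : R) ^+ n <= (2^-1) ^+ m.
Proof.
move=> h; apply: ler_wiXn2l => //; rewrite ?invr_ge0 ?ler0n //.
by rewrite invf_le1 // ler1n.
Qed.
End Real.
Section Neumann.
Variable R : realType.
Variable A : cstarAlg R.
Local Notation "x ** y" := (@cs_mul R A x y) (at level 40, left associativity).
Local Notation st := (@cs_star R A).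
Local Notation nrm := (@cs_nrm R A).
Variable one : A.
Hypothesis U : cs_unit_of one.
Variable z : A.
Hypothesis hz : nrm z <= (2^-1 : R).

Fixpoint pw n := if n is m.+1 then z ** pw m else one.
Fixpoint ps n := if n is m.+1 then ps m + pw m else 0.

Lemma pwC n : pw n ** z = z ** pw n.
Proof.
elim: n => [|n IH] /=; first by rewrite (U z).1 (U z).2.
by rewrite -mA IH.
Qed.

Lemma pw_nrm n : nrm (pw n) <= (2^-1) ^+ n.
Proof.
elim: n => [|n IH] /=; first by rewrite expr0 unit_nrm.
rewrite exprS; apply: le_trans (nM _ _) _.
apply: ler_pM => //; exact: n_ge0.
Qed.

Lemma psL n : (one - z) ** ps n = one - pw n.
Proof.
elim: n => [|n IH] /=; first by rewrite m0r subrr.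
by rewrite mDr IH mBl (U _).1 addrA subrK.
Qed.

Lemma psR n : ps n ** (one - z) = one - pw n.
Proof.
elim: n => [|n IH] /=; first by rewrite m0l subrr.
by rewrite mDl IH mBr (U _).2 pwC addrA subrK.
Qed.

Lemma ps_cauchy n k : nrm (ps (n + k) - ps n) <= 2 * (2^-1) ^+ n - 2 * (2^-1) ^+ (n + k).
Proof.
elim: k => [|k IH]; first by rewrite addn0 subrr n0 subrr.
rewrite addnS /= addrAC; apply: le_trans (nD _ _) _.
have := pw_nrm (n + k); rewrite exprS; lra.
Qed.

Lemma ps_bound n : nrm (ps n) <= 2.
Proof.
have := ps_cauchy 0 n; rewrite add0n /= subr0 expr0.
have : 0 <= (2^-1 : R) ^+ n by apply: exprn_ge0; rewrite invr_ge0 ler0n.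
lra.
Qed.

Lemma ps_cauchy2 N m n : (N <= m)%N -> (N <= n)%N -> nrm (ps m - ps n) <= 2 * (2^-1) ^+ N.
Proof.
have h0 : forall k, 0 <= (2^-1 : R) ^+ k by move=> k; apply: exprn_ge0; rewrite invr_ge0 ler0n.
wlog mn : m n / (n <= m)%N.
  move=> H hm hn; case: (leqP n m) => h; first exact: H.
  by rewrite nBC; apply: H => //; apply: ltnW.
move=> _ hn; rewrite -(subnKC mn); apply: le_trans (ps_cauchy _ _) _.
have := half_pow_mono R hn; have := h0 (n + (m - n))%N; lra.
Qed.

Lemma neumann : exists N : A, (one - z) ** N = one /\ N ** (one - z) = one /\ nrm N <= 2.
Proof.
have h0 : forall k, 0 <= (2^-1 : R) ^+ k by move=> k; apply: exprn_ge0; rewrite invr_ge0 ler0n.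
have [l Hl] : exists l : A, forall e : R, 0 < e -> exists N : nat, forall n : nat,
        (N <= n)%N -> nrm (ps n - l) < e.
  apply: (cs_complete (cs_ax A)) => e e0.
  have e4 : 0 < e / 2 / 2 by rewrite !divr_gt0.
  have [N HN] := half_pow_small e4.
  exists N => m n hm hn; apply: le_lt_trans (ps_cauchy2 hm hn) _.
  have := HN N (leqnn N); lra.
have nz1 : nrm (one - z) <= 2.
  have hh : (2^-1 : R) <= 1 by rewrite invf_le1 // ler1n.
  apply: le_trans (nB _ _) _; apply: le_trans (lerD (unit_nrm U) hz) _. lra.
have key : forall e : R, 0 < e -> exists n, nrm (ps n - l) <= e /\ (2^-1 : R) ^+ n <= e.
  move=> e e0; have [N1 H1] := Hl e e0; have [N2 H2] := half_pow_small e0.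
  exists (maxn N1 N2); split; apply: ltW; [apply: H1 | apply: H2];
    by rewrite leq_max leqnn ?orbT.
exists l; split; [|split].
- apply/eqP; rewrite -subr_eq0; apply/eqP; apply: eps0 => e e0.
  have [n [h1 h2]] := key (e / 3) ltac:(by rewrite divr_gt0).
  have -> : (one - z) ** l - one = (one - z) ** (l - ps n) - pw n.
    by rewrite mBr psL opprB [pw n - one]addrC addrA addrK.
  apply: le_trans (nB _ _) _; apply: le_trans (lerD (nM _ _) (pw_nrm n)) _.
  rewrite [nrm (l - ps n)]nBC; have := ler_pM (n_ge0 _) (n_ge0 _) nz1 h1; lra.
- apply/eqP; rewrite -subr_eq0; apply/eqP; apply: eps0 => e e0.
  have [n [h1 h2]] := key (e / 3) ltac:(by rewrite divr_gt0).
  have -> : l ** (one - z) - one = (l - ps n) ** (one - z) - pw n.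
    by rewrite mBl psR opprB [pw n - one]addrC addrA addrK.
  apply: le_trans (nB _ _) _; apply: le_trans (lerD (nM _ _) (pw_nrm n)) _.
  rewrite [nrm (l - ps n)]nBC [nrm (ps n - l) * _]mulrC; have := ler_pM (n_ge0 _) (n_ge0 _) nz1 h1; lra.
- apply/unstable.ler_gtP => x hx.
  have [n [h1 _]] := key (x - 2) ltac:(by rewrite subr_gt0).
  have -> : l = ps n - (ps n - l) by rewrite opprB addrC subrK.
  apply: le_trans (nB _ _) _; have := ps_bound n; lra.
Qed.
End Neumann.
Section Eps.
Variable R : realType.
Variable B : cstarAlg R.
Lemma eps_lin (D : B) (d C : R) : 0 < d ->
  (forall s : R, 0 < s -> s <= d -> cs_nrm D <= s * C) -> D = 0.
Proof.
move=> d0 H; apply: eps0 => e e0.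
have c1 : 0 < `|C| + 1 by apply: ltr_wpDl => //; exact: normr_ge0.
set s := Order.min d (e / (`|C| + 1)).
have s0 : 0 < s by rewrite lt_min d0 divr_gt0.
have sd : s <= d by rewrite ge_min lexx.
have se : s <= e / (`|C| + 1) by rewrite ge_min lexx orbT.
apply: le_trans (H s s0 sd) _.
have h1 : s * C <= s * (`|C| + 1).
  apply: ler_wpM2l; first exact: ltW.
  have := ler_norm C; lra.
apply: le_trans h1 _.
by rewrite -ler_pdivlMr.
Qed.
End Eps.

Lemma linB (R : realType) (A B : cstarAlg R) (Q : A -> B) : cs_linear Q ->
  forall a b, Q (a - b) = Q a - Q b.
Proof.
move=> [HD HZ] a b; apply/eqP; rewrite eq_sym subr_eq -HD subrK //.
Qed.

Section Deriv.
Variable R : realType.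
Variables A B : cstarAlg R.
Local Notation "x ** y" := (@cs_mul R _ x y) (at level 40, left associativity).
Variable one : A.
Hypothesis U : cs_unit_of one.
Variables P Q : A -> B.
Hypothesis linP : cs_linear P.
Hypothesis linQ : cs_linear Q.
Variable M : R.
Hypothesis M0 : 0 <= M.
Hypothesis bQ : forall x, cs_nrm (Q x) <= M * cs_nrm x.
Variable y : A.

Definition dl := (2^-1 : R) / (cs_nrm y + 1).
Definition Inv (s : R) (N : A) :=
  (one + s%:C *: y) ** N = one /\ N ** (one + s%:C *: y) = one /\ cs_nrm N <= 2.

Lemma dl_gt0 : 0 < dl.
Proof. rewrite /dl divr_gt0 //; have := n_ge0 y; lra. Qed.

Lemma exists_inv s : 0 < s -> s <= dl -> exists N, Inv s N.
Proof.
move=> s0 sd.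
have hz : cs_nrm (- (s%:C *: y)) <= (2^-1 : R).
  rewrite nN nZ cabsR ger0_norm ?ltW //.
  have y1 : 0 < cs_nrm y + 1 by have := n_ge0 y; lra.
  have : s * (cs_nrm y + 1) <= 2^-1 by rewrite -ler_pdivlMr.
  have := n_ge0 y; nra.
have [N [h1 [h2 h3]]] := neumann U hz.
by rewrite opprK in h1 h2; exists N.
Qed.

Lemma expand s N w : Inv s N -> w ** N = w - s%:C *: ((w ** y) ** N).
Proof.
move=> [h1 _].
have hN : N = one - s%:C *: (y ** N).
  by rewrite -h1 mDl (U N).1 mZl addrK.
by rewrite {1}hN mBr mZr (U w).2 mA.
Qed.

Lemma bnd (Y : B) w s N : Inv s N ->
  cs_nrm (Y ** Q ((w ** y) ** N)) <= cs_nrm Y * (M * (cs_nrm (w ** y) * 2)).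
Proof.
move=> [_ [_ hN]].
apply: le_trans (nM _ _) _; apply: ler_wpM2l; first exact: n_ge0.
apply: le_trans (bQ _) _; apply: ler_wpM2l => //.
apply: le_trans (nM _ _) _; apply: ler_wpM2l => //; exact: n_ge0.
Qed.

Lemma Gstep (X Y : B) (w1 w2 : A) :
  (forall s N, 0 < s -> s <= dl -> Inv s N -> Y ** Q (w1 ** N) = X ** Q (w2 ** N)) ->
  Y ** Q w1 = X ** Q w2 /\
  (forall s N, 0 < s -> s <= dl -> Inv s N ->
     Y ** Q ((w1 ** y) ** N) = X ** Q ((w2 ** y) ** N)).
Proof.
move=> H.
have key : forall s N, 0 < s -> s <= dl -> Inv s N ->
   Y ** Q w1 - X ** Q w2 = s%:C *: (Y ** Q ((w1 ** y) ** N) - X ** Q ((w2 ** y) ** N)).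
  move=> s N s0 sd hI; have := H s N s0 sd hI.
  rewrite (expand w1 hI) (expand w2 hI) !(linB linQ) !linQ.2 !mBr !mZr => h.
  set a := Y ** Q w1 in h *; set c := X ** Q w2 in h *.
  set b := Y ** _ in h *; set d := X ** _ in h *.
  have ha : a = c - s%:C *: d + s%:C *: b by apply/eqP; rewrite -subr_eq h.
  rewrite ha scalerBr addrAC [c - _]addrC addrK addrC //.
have D0 : Y ** Q w1 - X ** Q w2 = 0.
  apply: (eps_lin (d := dl) (C := cs_nrm Y * (M * (cs_nrm (w1 ** y) * 2)) +
            cs_nrm X * (M * (cs_nrm (w2 ** y) * 2)))) => [|s s0 sd].
    exact: dl_gt0.
  have [N hI] := exists_inv s0 sd.
  rewrite (key s N s0 sd hI) nZ cabsR (ger0_norm (ltW s0)).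
  rewrite ler_pM2l //.
  apply: le_trans (nB _ _) _; apply: lerD; exact: (bnd _ _ hI).
split; first by apply/eqP; rewrite -subr_eq0 D0.
move=> s N s0 sd hI; have := key s N s0 sd hI; rewrite D0 => /esym/eqP.
rewrite scaler_eq0 => /orP[|]; first by rewrite fmorph_eq0 gt_eqF.
by rewrite subr_eq0 => /eqP.
Qed.

Variable c : B.
Hypothesis HPQ : forall g h, g ** h = one -> h ** g = one -> P g ** Q h = c.

Lemma deriv1 : P y ** Q one = P one ** Q y /\ P one ** Q (y ** y) = P y ** Q y.
Proof.
have c1 : c = P one ** Q one by rewrite HPQ // (U one).1.
have step : forall s N, 0 < s -> s <= dl -> Inv s N ->
   P y ** Q (one ** N) = P one ** Q (y ** N).
  move=> s N s0 sd hI.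
  have := HPQ hI.1 hI.2.1.
  have hN : one = N + s%:C *: (y ** N) by rewrite -hI.1 mDl (U N).1 mZl.
  have hQ : Q one = Q N + s%:C *: Q (y ** N) by rewrite {1}hN linQ.1 linQ.2.
  rewrite c1 hQ linP.1 linP.2 mDl mDr mZl mZr => /addrI /scalerI.
  rewrite (U N).1; apply; rewrite fmorph_eq0 gt_eqF //.
have [G1 G2] := Gstep step.
split; first exact: G1.
have step2 : forall s N, 0 < s -> s <= dl -> Inv s N ->
   P y ** Q (y ** N) = P one ** Q ((y ** y) ** N).
  by move=> s N s0 sd hI; have := G2 s N s0 sd hI; rewrite (U y).1.
by have [G3 _] := Gstep step2; rewrite G3.
Qed.
End Deriv.
Section Alg.
Variable R : realType.
Variable B : cstarAlg R.
Local Notation "x ** y" := (@cs_mul R B x y) (at level 40, left associativity).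
Local Notation st := (@cs_star R B).

Lemma pi_lem (z : B) : z ** st z ** (z ** st z) = z ** st z -> z ** st z ** z = z.
Proof.
move=> hp; have hp' : z ** st z ** z ** st z = z ** st z := etrans (esym (mA _ _ _)) hp.
set w := z ** st z ** z - z.
have sw : st w = st z ** z ** st z - st z by rewrite /w sB !sM sK !mA.
have ww : w ** st w = 0.
  rewrite sw /w !mBr !mBl !mA hp' hp'.
  by rewrite subrr.
have : st w = 0.
  apply: n_eq0; have := nC (st w); rewrite sK ww n0 => /esym/eqP.
  by rewrite sqrf_eq0 => /eqP.
move=> h; apply/eqP; rewrite -subr_eq0 -/w; apply/eqP.
by rewrite -(sK w) h s0.
Qed.

Lemma proj_alg (e t : B) :
  t ** st e = t -> st e ** t = t -> e ** st e = t ** st t -> st t ** t = st e ** e ->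
  [/\ e ** e = e, st e = e, e ** t = t, t ** e = t & (t ** st t = e /\ st t ** t = e)].
Proof.
move=> Z1 Z2 E1 E2.
have h3 : t ** st t ** (t ** st t) = t ** st t.
  have -> : t ** st t ** (t ** st t) = t ** (st t ** t) ** st t by rewrite !mA.
  rewrite E2.
  have -> : t ** (st e ** e) ** st t = (t ** st e) ** st (t ** st e) by rewrite sM sK !mA.
  by rewrite Z1.
have ht := pi_lem h3.
have he : e ** st e ** e = e by apply: pi_lem; rewrite E1 h3.
have ht' : st t ** t ** st t = st t.
  have := @pi_lem (st t); rewrite sK; apply.
  have -> : st t ** t ** (st t ** t) = st t ** (t ** st t ** t) by rewrite !mA.
  by rewrite ht.
have he' : st e ** e ** st e = st e.
  have := @pi_lem (st e); rewrite sK; apply; rewrite -E2.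
  have -> : st t ** t ** (st t ** t) = st t ** (t ** st t ** t) by rewrite !mA.
  by rewrite ht.
have h5 : t ** st t = st e ** e.
  have -> : t ** st t = (st e ** t) ** st (st e ** t) by rewrite Z2.
  rewrite sM sK.
  have -> : st e ** t ** (st t ** e) = st e ** (t ** st t) ** e by rewrite !mA.
  rewrite -E1.
  have -> : st e ** (e ** st e) ** e = (st e ** e ** st e) ** e by rewrite !mA.
  by rewrite he'.
have hp1 : e ** st e = st e ** e by rewrite E1 h5.
have h6 : e ** t = t.
  have -> : e ** t = e ** st e ** t by rewrite -mA Z2.
  by rewrite E1 ht.
have h7 : st e = e.
  have a1 : e ** (st e ** e) = e by rewrite mA he.
  have a2 : st e ** (st e ** e) = st e by rewrite -hp1 mA he'.
  have a3 : (e - st e) ** t = 0 by rewrite mBl h6 Z2 subrr.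
  have a4 : (e - st e) ** (st e ** e) = 0 by rewrite -h5 mA a3 m0l.
  by move: a4; rewrite mBl a1 a2 => /eqP; rewrite subr_eq0 => /eqP /esym.
have h8 : t ** e = t by move: Z1; rewrite h7.
have ee : e ** e = e.
  have b1 : e ** e ** e = e by move: he; rewrite h7.
  have b2 : st e ** e ** e = st e ** e by rewrite -E2 -mA h8.
  by move: b2; rewrite h7 b1 => /esym.
split => //; split; first by rewrite h5 h7 ee.
by rewrite E2 h7 ee.
Qed.
End Alg.
Unset Implicit Arguments.
Theorem theorem3p1 (R : realType) (A B : cstarAlg R) (one : A) (T : A -> B) (u : A) :
  cs_unit_of one ->
  cs_linear T -> cs_bounded T ->
  cs_unitary one u -> cs_star_hom_at T u ->
  [/\ cs_projection (T one),
      (forall a : A, cs_mul (T one) (T a) = cs_mul (T a) (T one)),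
      cs_jordan_hom (fun a : A => cs_mul (T one) (T a)),
      ((forall x : A, cs_mul (T one) (T x) = T x) -> cs_jordan_hom T) &
      (forall oneB : B, cs_unit_of oneB -> cs_unitary oneB (T u) ->
         forall x : A, cs_mul (T one) (T x) = T x)].
Proof.
move=> U1 linT [M bM] [Uu1 Uu2] [H1 H2].
have bT : forall x, cs_nrm (T x) <= `|M| * cs_nrm x.
  move=> x; apply: le_trans (bM x) _; apply: ler_wpM2r; first exact: n_ge0.
  exact: ler_norm.
pose S := fun x : A => cs_star (T (cs_star x)).
have linS : cs_linear S.
  split => [a b|k a]; rewrite /S; first by rewrite sD linT.1 sD.
  by rewrite sZ linT.2 sZ conjcK.
have bS : forall x, cs_nrm (S x) <= `|M| * cs_nrm x.
  by move=> x; rewrite /S nS; apply: le_trans (bT _) _; rewrite nS.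
pose P1 := fun x : A => T (cs_mul u x).
have linP1 : cs_linear P1.
  split => [a b|k a]; rewrite /P1; first by rewrite mDr linT.1.
  by rewrite mZr linT.2.
have HPQ1 : forall g h, cs_mul g h = one -> cs_mul h g = one -> cs_mul (P1 g) (S h) = T u.
  move=> g h gh _.
  case: (H1 (cs_mul u g) (cs_star h)); last by move=> _ ->.
  by rewrite sK -mA gh (U1 u).2.
pose Q2 := fun x : A => T (cs_mul x u).
have linQ2 : cs_linear Q2.
  split => [a b|k a]; rewrite /Q2; first by rewrite mDl linT.1.
  by rewrite mZl linT.2.
have bQ2 : forall x, cs_nrm (Q2 x) <= (`|M| * cs_nrm u) * cs_nrm x.
  move=> x; apply: le_trans (bT _) _; rewrite -mulrA; apply: ler_wpM2l.
    exact: normr_ge0.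
  by rewrite mulrC; apply: nM.
have HPQ2 : forall g h, cs_mul g h = one -> cs_mul h g = one -> cs_mul (S g) (Q2 h) = T u.
  move=> g h gh _.
  case: (H2 (cs_star g) (cs_mul h u)); last by move=> _ ->.
  by rewrite sK mA gh (U1 u).1.
have M0 : 0 <= `|M| by exact: normr_ge0.
have M0' : 0 <= `|M| * cs_nrm u by apply: mulr_ge0 => //; exact: n_ge0.
have D1 := fun y => deriv1 U1 linP1 linS M0 bS y HPQ1.
have D2 := fun y => deriv1 U1 linS linQ2 M0' bQ2 y HPQ2.
have Z1 := HPQ1 one one (U1 one).1 (U1 one).1.
have Z2 := HPQ2 one one (U1 one).1 (U1 one).1.
have S1 : S one = cs_star (T one) by rewrite /S (unit_star U1).
have Sst : forall x, S (cs_star x) = cs_star (T x) by move=> x; rewrite /S sK.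
rewrite /P1 /Q2 S1 (U1 u).1 (U1 u).2 in Z1 Z2.
have E1 := (D1 (cs_star u)).1.
rewrite /P1 S1 Sst Uu2 (U1 u).2 in E1.
have E2 := (D2 (cs_star u)).1.
rewrite /Q2 S1 Sst Uu1 (U1 u).1 in E2.
have [ee h7 h6 h8 [tt1 tt2]] := proj_alg Z1 Z2 E1 E2.
set e := T one in ee h7 h6 h8 tt1 tt2 S1 Z1 Z2 E1 E2 *.
set t := T u in ee h7 h6 h8 tt1 tt2 Z1 Z2 E1 E2 *.
have ii : forall y, cs_mul (T (cs_mul u y)) e = cs_mul t (S y).
  by move=> y; have := (D1 y).1; rewrite /P1 S1 h7 (U1 u).2.
have iii : forall y, cs_mul t (S (cs_mul y y)) = cs_mul (T (cs_mul u y)) (S y).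
  by move=> y; have := (D1 y).2; rewrite /P1 (U1 u).2.
have v : forall y, cs_mul (S y) t = cs_mul e (T (cs_mul y u)).
  by move=> y; have := (D2 y).1; rewrite /Q2 S1 h7 (U1 u).1.
have cS : forall y, cs_mul e (S y) = cs_mul (S y) e.
  move=> y.
  have a : cs_mul (cs_mul (cs_star t) (T (cs_mul u y))) e = cs_mul e (S y).
    by rewrite -mA ii mA tt2.
  have b : cs_mul (cs_mul e (S y)) e = cs_mul e (S y) by rewrite -a -mA ee.
  have c : cs_mul (cs_mul e (T (cs_mul y u))) (cs_star t) = cs_mul (S y) e.
    by rewrite -v -mA tt1.
  have d : cs_mul e (cs_mul (S y) e) = cs_mul (S y) e by rewrite -c !mA ee.
  by rewrite -b -mA d.
have comm : forall a, cs_mul e (T a) = cs_mul (T a) e.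
  move=> a; have := cS (cs_star a); rewrite Sst => h.
  by have := congr1 (@cs_star R B) h; rewrite !sM !sK h7 => ->.
have j1 : forall y, cs_mul e (S (cs_mul y y)) = cs_mul (cs_mul e (S y)) (S y).
  move=> y.
  have k1 : cs_mul (cs_mul t (S (cs_mul y y))) e = cs_mul (cs_mul t (S y)) (S y).
    by rewrite iii -mA -cS mA ii.
  have := congr1 (@cs_mul R B (cs_star t)) k1; rewrite !mA tt2 -mA -cS mA ee => ->.
  done.
have sq : forall x, cs_mul e (T (cs_mul x x)) = cs_mul (cs_mul e (T x)) (cs_mul e (T x)).
  move=> x; have := j1 (cs_star x); rewrite /S sM !sK => h.
  have := congr1 (@cs_star R B) h; rewrite !sM !sK h7 => h'.
  by rewrite comm h' comm !mA -(mA (T x) e (T x)) comm !mA -(mA _ e e) ee.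
have jor : forall a b, cs_mul e (T (cs_jprod a b)) = cs_jprod (cs_mul e (T a)) (cs_mul e (T b)).
  move=> a b; rewrite /cs_jprod linT.2 mZr; congr (_ *: _).
  have h := sq (a + b).
  rewrite !(mDl, mDr, linT.1) in h.
  rewrite (sq a) (sq b) in h.
  rewrite linT.1 mDr.
  by move: h; rewrite -!addrA => /addrI; rewrite !addrA => /addIr.
split.
- by split.
- exact: comm.
- split; last exact: jor.
  by split => [x y|k x]; rewrite ?linT.1 ?linT.2 ?mDr ?mZr.
- move=> hT; split => // x y.
  by have := jor x y; rewrite !hT.
- move=> oneB UB [ut1 ut2] x.
  by rewrite -tt1 ut2 (UB _).1.
Qed.
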